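(* Let $\mathcal{E}=(\mathbf{R},\mathbf{S},\Sigma_{st},\mathbf{F})$ be a consistent constructive relational to RDF data exchange setting and let $\mathcal{Q}$ be a class of Boolean graph queries robust under simulation. For any query $Q\in\mathcal{Q}$ and any consistent instance $I$ of $\mathbf{R}$, $\mathit{true}$ is the certain answer to $Q$ in $I$ w.r.t. $\mathcal{E}$ if and only if $Q$ is true in every universal simulation solution to $\mathcal{E}$ for $I$.
   Context: Values: $\mathsf{Iri}$ (IRIs, containing predicates $\mathsf{Pred}$), $\mathsf{NullIri}$, $\mathsf{Lit}$ with null literals $\mathsf{NullLit}\subseteq\mathsf{Lit}$; null values are those in $\mathsf{NullLit}\cup\mathsf{NullIri}$, other values are constants. $\mathbf{R}=(\mathcal{R},\Sigma_{fd})$: relation names with arities and functional dependencies; an instance assigns finite sets of tuples of non-null literals to relation names and is consistent if it satisfies $\Sigma_{fd}$. A typed graph: finite set of triples $(s,p,o)$, $s\in\mathsf{Iri}\cup\mathsf{NullIri}$, $p\in\mathsf{Pred}$, $o\in\mathsf{Iri}\cup\mathsf{NullIri}\cup\mathsf{Lit}$, with type facts $T(n)$ ($T\in\mathcal{T}$) and $\mathit{Literal}(n)$ (literal nodes only of type $\mathit{Literal}$, others only of types in $\mathcal{T}$). Deterministic shape schema $\mathbf{S}=(\mathcal{T},\delta)$: partial $\delta:\mathcal{T}\times\mathsf{Pred}\to(\mathcal{T}\cup\{\mathit{Literal}\})\times\{1,?,*,+\}$; a typed graph satisfies it iff for each $\delta(T,p)=S^\mu$, every $p$-successor of a $T$-typed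 node has type $S$, with at most one such successor if $\mu\in\{1,?\}$ and at least one if $\mu\in\{1,+\}$. Constructive setting: IRI constructors $f\in\mathcal{F}$ interpreted as $f^F:\mathsf{Lit}^n\to\mathsf{Iri}$ (constants) with pairwise disjoint ranges; full st-tgds $\forall\bar x.\,\varphi\Rightarrow\psi$, $\varphi$ a conjunction of atoms over $\mathcal{R}$, $\psi$ a conjunction of atoms $\mathit{Triple}(t_1,p,t_2)$, $T(t)$, $\mathit{Literal}(t)$ with terms variables or $f(\bar u)$. A solution for $I$ is a typed graph satisfying $\mathbf{S}$ that together with $I$ satisfies $\Sigma_{st}$; $\mathcal{E}$ is consistent if every consistent instance has a solution. $\mathit{true}$ is the certain answer to a Boolean query $Q$ in $I$ w.r.t. $\mathcal{E}$ iff $Q$ is true in every solution for $I$. Simulation (on the underlying graphs): a relation $R$ between nodes of $G$ and $H$ such that for $(n,m)\in R$: $n$ literal iff $m$ literal; if $n$ is not null then $n=m$; every edge $(n,p,n')\in G$ is matched by some $(m,p,m')\in H$ with $(n',m')\in R$. $G$ is simulated by $H$ if every node of $G$ is related by some simulation to some node of $H$. A class of Boolean queries is robust under simulation if, whenever $G$ is simulated by $H$, every query of the class true in $G$ is true in $H$. A universal simulation solution to $\mathcal{E}$ for $I$ is a solution $\mathcal{U}$ for $I$ that is simulated by every solution for $I$. *)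

(* Defs.v *)
From Stdlib Require List.
From mathcomp Require Import all_boot.
Set Implicit Arguments. Unset Strict Implicit. Unset Printing Implicit Defensive.

Section RelToRDF.

Variables (Iri Lit : Type) (Pred : Iri -> Prop).

Inductive value : Type :=
  | VIri of Iri
  | VNullIri of nat
  | VLit of Lit
  | VNullLit of nat.

Definition is_lit (v : value) : Prop :=
  match v with VLit _ | VNullLit _ => True | _ => False end.
Definition is_null (v : value) : Prop :=
  match v with VNullIri _ | VNullLit _ => True | _ => False end.
Definition is_iri_node (v : value) : Prop :=
  match v with VIri _ | VNullIri _ => True | _ => False end.

Definition triple : Type := (value * Iri * value)%type.

Inductive mult : Type := MOne | MOpt | MStar | MPlus.
Inductive stype (Ty : Type) : Type := SType of Ty | SLiteral.

Inductive term (Fn : Type) : Type :=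
  | TVar of nat
  | TFun of Fn & list nat.

Inductive hatom (Fn Ty : Type) : Type :=
  | HTriple of term Fn & Iri & term Fn
  | HType of Ty & term Fn
  | HLit of term Fn.

Record tgd (Rel Fn Ty : Type) : Type := Tgd {
  tbody : list (Rel * list nat);
  thead : list (hatom Fn Ty) }.

Record setting : Type := Setting {
  Rel : finType;
  arity : Rel -> nat;
  (* FD (r, A, B) : attributes A determine attributes B in relation r *)
  fds : list (Rel * list nat * list nat);
  Ty : finType;
  delta : Ty -> Iri -> option (stype Ty * mult);
  Fn : finType;
  farity : Fn -> nat;
  finterp : Fn -> list Lit -> Iri;
  st_tgds : list (tgd Rel Fn Ty) }.

Section WithSetting.
Variable E : setting.

Definition term_vars (t : term (Fn E)) : list nat :=
  match t with TVar x => [:: x] | TFun _ xs => xs end.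
Definition hatom_vars (a : hatom (Fn E) (Ty E)) : list nat :=
  match a with
  | HTriple t1 _ t2 => term_vars t1 ++ term_vars t2
  | HType _ t => term_vars t
  | HLit t => term_vars t end.
Definition term_wf (t : term (Fn E)) : Prop :=
  match t with TVar _ => True | TFun f xs => length xs = farity f end.

Definition wf_setting : Prop :=
  (forall (T : Ty E) p, delta T p <> None -> Pred p) /\
  (forall (f g : Fn E) a b, length a = farity f -> length b = farity g ->
     finterp f a = finterp g b -> f = g) /\
  (* st-tgds are well formed full st-tgds *)
  (forall d, List.In d (st_tgds E) ->
     (forall r xs, List.In (r, xs) (tbody d) -> length xs = arity r) /\
     (forall a, List.In a (thead d) ->
        (forall x, List.In x (hatom_vars a) ->
           exists r xs, List.In (r, xs) (tbody d) /\ List.In x xs) /\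
        match a with
        | HTriple t1 p t2 => Pred p /\ term_wf t1 /\ term_wf t2
        | HType _ t => term_wf t
        | HLit t => term_wf t end)).

Definition instance : Type := Rel E -> list (list Lit).

Definition is_instance (I : instance) : Prop :=
  forall r t, List.In t (I r) -> length t = arity r.

Definition satisfies_fds (I : instance) : Prop :=
  forall r A B, List.In (r, A, B) (fds E) ->
    forall t1 t2, List.In t1 (I r) -> List.In t2 (I r) ->
      (forall i, List.In i A -> List.nth_error t1 i = List.nth_error t2 i) ->
      forall j, List.In j B -> List.nth_error t1 j = List.nth_error t2 j.

Definition consistent_instance (I : instance) : Prop :=
  is_instance I /\ satisfies_fds I.

Record tgraph : Type := TGraph {
  gtriples : list triple;
  gtypes : list (value * Ty E);
  glits : list value }.

Definition is_typed_graph (G : tgraph) : Prop :=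
  (forall s p o, List.In (s, p, o) (gtriples G) -> is_iri_node s /\ Pred p) /\
  (forall n T, List.In (n, T) (gtypes G) -> ~ is_lit n) /\
  (forall n, List.In n (glits G) -> is_lit n).

Definition has_stype (G : tgraph) (S : stype (Ty E)) (n : value) : Prop :=
  match S with
  | SType T => List.In (n, T) (gtypes G)
  | SLiteral => List.In n (glits G) end.

Definition satisfies_shape (G : tgraph) : Prop :=
  forall T p S mu, delta T p = Some (S, mu) ->
  forall n, List.In (n, T) (gtypes G) ->
    (forall o, List.In (n, p, o) (gtriples G) -> has_stype G S o) /\
    ((mu = MOne \/ mu = MOpt) ->
       forall o1 o2, List.In (n, p, o1) (gtriples G) ->
         List.In (n, p, o2) (gtriples G) -> o1 = o2) /\
    ((mu = MOne \/ mu = MPlus) -> exists o, List.In (n, p, o) (gtriples G)).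

Definition eval_term (v : nat -> Lit) (t : term (Fn E)) : value :=
  match t with
  | TVar x => VLit (v x)
  | TFun f xs => VIri (finterp f (map v xs)) end.

Definition hatom_holds (G : tgraph) (v : nat -> Lit) (a : hatom (Fn E) (Ty E))
  : Prop :=
  match a with
  | HTriple t1 p t2 => List.In (eval_term v t1, p, eval_term v t2) (gtriples G)
  | HType T t => List.In (eval_term v t, T) (gtypes G)
  | HLit t => List.In (eval_term v t) (glits G) end.

Definition satisfies_tgds (I : instance) (G : tgraph) : Prop :=
  forall d, List.In d (st_tgds E) ->
  forall v : nat -> Lit,
    (forall r xs, List.In (r, xs) (tbody d) -> List.In (map v xs) (I r)) ->
    forall a, List.In a (thead d) -> hatom_holds G v a.

Definition solution (I : instance) (G : tgraph) : Prop :=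
  is_typed_graph G /\ satisfies_shape G /\ satisfies_tgds I G.

Definition consistent_setting : Prop :=
  forall I, consistent_instance I -> exists G, solution I G.

End WithSetting.

Record graph : Type := Graph { gnodes : list value; gedges : list triple }.

Definition underlying (E : setting) (G : tgraph E) : graph :=
  Graph (map (fun t => t.1.1) (gtriples G) ++ map (fun t => t.2) (gtriples G)
         ++ map fst (gtypes G) ++ glits G)
        (gtriples G).

Definition simulation (G H : graph) (R : value -> value -> Prop) : Prop :=
  forall n m, R n m ->
    List.In n (gnodes G) /\ List.In m (gnodes H) /\
    (is_lit n <-> is_lit m) /\
    (~ is_null n -> n = m) /\
    (forall p n', List.In (n, p, n') (gedges G) ->
       exists m', List.In (m, p, m') (gedges H) /\ R n' m').

Definition simulated (G H : graph) : Prop :=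
  forall n, List.In n (gnodes G) ->
    exists R, simulation G H R /\ exists m, List.In m (gnodes H) /\ R n m.

Definition query : Type := graph -> Prop.

Definition robust_under_simulation (QC : query -> Prop) : Prop :=
  forall Q, QC Q -> forall G H, simulated G H -> Q G -> Q H.

Definition certain_true (E : setting) (I : instance E) (Q : query) : Prop :=
  forall G, solution I G -> Q (underlying G).

Definition universal_sim_solution (E : setting) (I : instance E) (U : tgraph E)
  : Prop :=
  solution I U /\
  forall G, solution I G -> simulated (underlying U) (underlying G).

End RelToRDF.

(* Main.v *)
Require Import Defs.
From mathcomp Require Import all_boot.
From Stdlib Require Import ClassicalEpsilon Classical.
Set Implicit Arguments. Unset Strict Implicit. Unset Printing Implicit Defensive.

Definition dec (P : Prop) : bool :=
  if excluded_middle_informative P then true else false.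
Lemma decE (P : Prop) : dec P = true <-> P.
Proof. rewrite /dec; case: excluded_middle_informative => //= _; split=> //. Qed.

Lemma catE (A : Type) (s1 s2 : seq A) : cat s1 s2 = List.app s1 s2.
Proof. by elim: s1 => //= a s ->. Qed.
Lemma mapE (A B : Type) (f : A -> B) (s : seq A) : map f s = List.map f s.
Proof. by elim: s => //= a s ->. Qed.
Lemma In_mem (T : eqType) (x : T) (s : seq T) : List.In x s <-> x \in s.
Proof.
elim: s => [|a s IH] //=; rewrite in_cons; split.
- by case=> [->|/IH ->]; rewrite ?eqxx ?orbT.
- by case/orP=> [/eqP ->|/IH]; [left|right].
Qed.
Lemma in_filter_dec (A : Type) (P : A -> Prop) x s :
  List.In x (List.filter (fun y => dec (P y)) s) <-> List.In x s /\ P x.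
Proof. by rewrite List.filter_In decE. Qed.

Section Main.
Variables (Iri Lit : Type) (Pred : Iri -> Prop) (E : setting Iri Lit)
  (I : instance E) (G0 : tgraph E).
Hypothesis wf : wf_setting Pred E.
Hypothesis H0 : solution Pred I G0.
Notation V := (value Iri Lit).
Notation sol := (solution Pred I).
Notation In := List.In.

Definition allsol (P : tgraph E -> Prop) := forall G, sol G -> P G.
Definition nonnull (v : V) := ~ is_null v.
Definition realizes (G : tgraph E) (m : V) (X : {set Ty E}) :=
  forall T, T \in X -> In (m, T) (gtypes G).
Definition reqP (X : {set Ty E}) p := exists T, T \in X /\ exists S mu,
  delta T p = Some (S, mu) /\ (mu = MOne \/ mu = MPlus).
Definition haslit (X : {set Ty E}) p := exists T, T \in X /\ exists mu,
  delta T p = Some (SLiteral (Ty E), mu).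
Definition succX (X : {set Ty E}) p : {set Ty E} :=
  [set S | dec (exists T, T \in X /\ exists mu, delta T p = Some (SType S, mu))].
Definition nullX (X : {set Ty E}) : V := VNullIri Iri Lit (nat_of_ord (enum_rank X)).
Definition tgt X p : V :=
  if dec (haslit X p) then VNullLit Iri Lit 0 else nullX (succX X p).
Definition Xc (c : V) : {set Ty E} :=
  [set T | dec (allsol (fun G => In (c, T) (gtypes G)))].
Definition good X := allsol (fun G => exists m,
  In m (gnodes (underlying G)) /\ ~ is_lit m /\ realizes G m X).
Definition P0 := List.map (fun t : triple Iri Lit => t.1.2) (gtriples G0).
Definition Uc_tr := List.filter (fun t : triple Iri Lit =>
  dec (nonnull t.1.1 /\ nonnull t.2 /\ allsol (fun G => In t (gtriples G))))
  (gtriples G0).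
Definition Uc_ty := List.filter (fun x : V * Ty E =>
  dec (nonnull x.1 /\ allsol (fun G => In x (gtypes G)))) (gtypes G0).
Definition Uc_lit := List.filter (fun v : V =>
  dec (nonnull v /\ allsol (fun G => In v (glits G)))) (glits G0).
Definition Cs := List.map fst Uc_ty.
Definition new_c := List.flat_map (fun c => List.flat_map (fun p =>
  if dec (reqP (Xc c) p /\ ~ exists o, In (c, p, o) Uc_tr)
  then [:: (c, p, tgt (Xc c) p)] else [::]) P0) Cs.
Definition Xs := List.filter (fun X => dec (good X)) (enum {set Ty E}).
Definition new_n := List.flat_map (fun X => List.flat_map (fun p =>
  if dec (reqP X p) then [:: (nullX X, p, tgt X p)] else [::]) P0) Xs.
Definition n_ty := List.flat_map (fun X => List.map (fun T => (nullX X, T)) (enum X)) Xs.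
Definition U : tgraph E := TGraph (List.app Uc_tr (List.app new_c new_n))
  (List.app Uc_ty n_ty)
  (List.app Uc_lit (List.filter (fun v => dec (v = VNullLit Iri Lit 0))
     (List.map (fun t : triple Iri Lit => t.2) (List.app new_c new_n)))).

Lemma in_Uc_tr t : In t Uc_tr <->
  nonnull t.1.1 /\ nonnull t.2 /\ allsol (fun G => In t (gtriples G)).
Proof.
rewrite /Uc_tr in_filter_dec; split; first by case.
by case=> a [b c]; split=> //; apply: c.
Qed.
Lemma in_Uc_ty x : In x Uc_ty <-> nonnull x.1 /\ allsol (fun G => In x (gtypes G)).
Proof.
rewrite /Uc_ty in_filter_dec; split; first by case.
by case=> a c; split=> //; apply: c.
Qed.
Lemma in_Uc_lit x : In x Uc_lit <-> nonnull x /\ allsol (fun G => In x (glits G)).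
Proof.
rewrite /Uc_lit in_filter_dec; split; first by case.
by case=> a c; split=> //; apply: c.
Qed.
Lemma in_Xc c T : T \in Xc c <-> allsol (fun G => In (c, T) (gtypes G)).
Proof. rewrite /Xc inE; split; [by move/decE | by move=> H; apply/decE]. Qed.
Lemma in_Cs c : In c Cs <-> exists T, In (c, T) Uc_ty.
Proof.
rewrite /Cs List.in_map_iff; split.
- by case=> [[c' T] [/= -> H]]; exists T.
- by case=> T H; exists (c, T).
Qed.
Lemma in_new_c t : In t new_c <-> exists c p, t = (c, p, tgt (Xc c) p) /\
  In c Cs /\ In p P0 /\ reqP (Xc c) p /\ ~ exists o, In (c, p, o) Uc_tr.
Proof.
rewrite /new_c List.in_flat_map; split.
- case=> c [Hc]; rewrite List.in_flat_map => [[p [Hp]]].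
  case Hd: (dec _) => //=; move/decE: Hd => [Hr Hn] [] // <-.
  by exists c, p.
- case=> c [p [-> [Hc [Hp [Hr Hn]]]]]; exists c; split=> //.
  rewrite List.in_flat_map; exists p; split=> //.
  have -> : dec (reqP (Xc c) p /\ ~ exists o, In (c, p, o) Uc_tr) = true by apply/decE.
  by left.
Qed.
Lemma in_new_n t : In t new_n <-> exists X p, t = (nullX X, p, tgt X p) /\
  good X /\ In p P0 /\ reqP X p.
Proof.
rewrite /new_n List.in_flat_map; split.
- case=> X [HX]; rewrite List.in_flat_map => [[p [Hp]]].
  case Hd: (dec _) => //=; move/decE: Hd => Hr [] // <-.
  move: HX; rewrite /Xs in_filter_dec => -[_ Hg].
  by exists X, p.
- case=> X [p [-> [Hg [Hp Hr]]]]; exists X; split.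
  + rewrite /Xs in_filter_dec; split=> //; apply/In_mem; by rewrite mem_enum.
  rewrite List.in_flat_map; exists p; split=> //.
  have -> : dec (reqP X p) = true by apply/decE.
  by left.
Qed.
Lemma in_n_ty n T : In (n, T) n_ty <-> exists X, n = nullX X /\ good X /\ T \in X.
Proof.
rewrite /n_ty List.in_flat_map; split.
- case=> X [HX]; rewrite List.in_map_iff => -[T' [[<- <-] HT]].
  move: HX; rewrite /Xs in_filter_dec => -[_ Hg].
  by exists X; split=> //; split=> //; move/In_mem: HT; rewrite mem_enum.
- case=> X [-> [Hg HT]]; exists X; split.
  + rewrite /Xs in_filter_dec; split=> //; apply/In_mem; by rewrite mem_enum.
  rewrite List.in_map_iff; exists T; split=> //; apply/In_mem; by rewrite mem_enum.
Qed.

Lemma in_U_tr t : In t (gtriples U) <-> In t Uc_tr \/ In t new_c \/ In t new_n.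
Proof. by rewrite /U /= !List.in_app_iff. Qed.
Lemma in_U_ty x : In x (gtypes U) <-> In x Uc_ty \/ In x n_ty.
Proof. by rewrite /U /= !List.in_app_iff. Qed.
Lemma in_U_lit v : In v (glits U) <-> In v Uc_lit \/
  (v = VNullLit Iri Lit 0 /\ exists t, In t (List.app new_c new_n) /\ t.2 = v).
Proof.
rewrite /U /= List.in_app_iff in_filter_dec List.in_map_iff.
split.
- case=> [H|[[t [H1 H2]] H3]]; [by left|right].
  by split=> //; exists t.
- case=> [H|[H3 [t [H1 H2]]]]; [by left|right].
  by split=> //; exists t.
Qed.


Lemma nodes_sub (G : tgraph E) s p o : In (s, p, o) (gtriples G) -> In s (gnodes (underlying G)).
Proof. move=> H; rewrite /underlying /= !catE !mapE !List.in_app_iff; left; apply/List.in_map_iff; by exists (s, p, o). Qed.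
Lemma nodes_obj (G : tgraph E) s p o : In (s, p, o) (gtriples G) -> In o (gnodes (underlying G)).
Proof. move=> H; rewrite /underlying /= !catE !mapE !List.in_app_iff; right; left; apply/List.in_map_iff; by exists (s, p, o). Qed.
Lemma nodes_ty (G : tgraph E) n T : In (n, T) (gtypes G) -> In n (gnodes (underlying G)).
Proof. move=> H; rewrite /underlying /= !catE !mapE !List.in_app_iff; right; right; left; apply/List.in_map_iff; by exists (n, T). Qed.
Lemma nodes_lit (G : tgraph E) n : In n (glits G) -> In n (gnodes (underlying G)).
Proof. move=> H; rewrite /underlying /= !catE !mapE !List.in_app_iff; by right; right; right. Qed.
Lemma nodes_inv (G : tgraph E) n : In n (gnodes (underlying G)) ->
  (exists p o, In (n, p, o) (gtriples G)) \/ (exists s p, In (s, p, n) (gtriples G)) \/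
  (exists T, In (n, T) (gtypes G)) \/ In n (glits G).
Proof.
rewrite /underlying /= !catE !mapE !List.in_app_iff !List.in_map_iff.
case=> [[[[s p] o] [/= <- H]]|[[[[s p] o] [/= <- H]]|[[[m T] [/= <- H]]|H]]].
- by left; exists p, o.
- by right; left; exists s, p.
- by right; right; left; exists T.
- by right; right; right.
Qed.

Lemma nullX_inj X Y : nullX X = nullX Y -> X = Y.
Proof. by case=> /ord_inj /enum_rank_inj. Qed.
Lemma nullX_nn v X : nonnull v -> v <> nullX X.
Proof. by move=> H Ev; apply: H; rewrite Ev. Qed.
Lemma notlit_iri (v : V) : ~ is_lit v -> is_iri_node v.
Proof. by case: v => /= * //; exfalso; auto. Qed.

Lemma sol_ty G n T : sol G -> In (n, T) (gtypes G) -> ~ is_lit n.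
Proof. by move=> [[_ [H _]] _]; apply: H. Qed.
Lemma sol_lit G n : sol G -> In n (glits G) -> is_lit n.
Proof. by move=> [[_ [_ H]] _]; apply: H. Qed.

Lemma step G m (X : {set Ty E}) p : sol G -> realizes G m X -> reqP X p -> exists m',
  In (m, p, m') (gtriples G) /\
  ((tgt X p = VNullLit Iri Lit 0 /\ is_lit m') \/
   (tgt X p = nullX (succX X p) /\ ~ is_lit m' /\ realizes G m' (succX X p))).
Proof.
move=> HG HR [T [HT [S [mu [Hd Hmu]]]]].
have [_ [Hsh _]] := HG.
have [Ha [_ Hc]] := Hsh T p S mu Hd m (HR T HT).
have [m' Hm'] := Hc Hmu.
exists m'; split=> //.
rewrite /tgt. case Hl: (dec (haslit X p)).
- left; split=> //. move/decE: Hl => [T' [HT' [mu' Hd']]].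
  have [Ha' _] := Hsh T' p _ mu' Hd' m (HR T' HT').
  exact: (sol_lit HG (Ha' m' Hm')).
- right; split=> //.
  have nl : ~ haslit X p by move=> H; move/decE: H; rewrite Hl.
  split.
  + move: Hd Ha; case: S => [S0|] Hd Ha.
    * exact: (sol_ty HG (Ha m' Hm')).
    * by case: nl; exists T; split=> //; exists mu.
  + move=> S'; rewrite inE => /decE [T'' [HT'' [mu'' Hd'']]].
    have [Ha'' _] := Hsh T'' p _ mu'' Hd'' m (HR T'' HT'').
    exact: (Ha'' m' Hm').
Qed.

Lemma tgt_type G m (X : {set Ty E}) p T S0 mu : sol G -> realizes G m X -> reqP X p -> T \in X ->
  delta T p = Some (SType S0, mu) -> tgt X p = nullX (succX X p) /\ S0 \in succX X p.
Proof.
move=> HG HR Hr HT Hd.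
have [m' [He [[_ Hl]|[Ht _]]]] := step HG HR Hr.
- have [_ [Hsh _]] := HG.
  have [Ha _] := Hsh T p _ mu Hd m (HR T HT).
  by case: (sol_ty HG (Ha m' He)).
- split=> //; rewrite inE; apply/decE; exists T; split=> //; by exists mu.
Qed.
Lemma tgt_lit (X : {set Ty E}) p T mu : T \in X -> delta T p = Some (SLiteral (Ty E), mu) ->
  tgt X p = VNullLit Iri Lit 0.
Proof.
move=> HT Hd; rewrite /tgt.
have -> : dec (haslit X p) = true by apply/decE; exists T; split=> //; exists mu.
done.
Qed.

Lemma good_tgt (X : {set Ty E}) p : good X -> reqP X p -> tgt X p = nullX (succX X p) -> good (succX X p).
Proof.
move=> Hg Hr Ht G HG; have [m [Hm [Hnl HR]]] := Hg G HG.
have [m' [He [[Ht' _]|[_ [Hnl' HR']]]]] := step HG HR Hr.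
- by rewrite Ht in Ht'.
- by exists m'; split; [exact: nodes_obj He|].
Qed.
Lemma good_Xc c : In c Cs -> good (Xc c).
Proof.
move/in_Cs=> [T /in_Uc_ty [Hn Ha]] G HG; exists c; split; first exact: nodes_ty (Ha G HG).
split; first exact: sol_ty HG (Ha G HG).
by move=> T' /in_Xc H; exact: H G HG.
Qed.
Lemma real_Xc c G : sol G -> realizes G c (Xc c).
Proof. by move=> HG T /in_Xc H; exact: H G HG. Qed.


Lemma cs_nn c : In c Cs -> nonnull c.
Proof. by move/in_Cs=> [T /in_Uc_ty [H _]]. Qed.
Lemma reqP_pred (X : {set Ty E}) p : reqP X p -> Pred p.
Proof. move=> [T [_ [S [mu [Hd _]]]]]; apply: (wf.1 T p); by rewrite Hd. Qed.

Lemma succ_const n p o : nonnull n -> In (n, p, o) (gtriples U) ->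
  In (n, p, o) Uc_tr \/ (o = tgt (Xc n) p /\ In n Cs /\ In p P0 /\
     reqP (Xc n) p /\ ~ exists o', In (n, p, o') Uc_tr).
Proof.
move=> Hn /in_U_tr [H|[/in_new_c [c [p' [[<- <- ->] H]]]|/in_new_n [X [p' [[Ex _ _] _]]]]].
- by left.
- by right.
- by case: (nullX_nn Hn Ex).
Qed.
Lemma succ_null (X : {set Ty E}) p o : In (nullX X, p, o) (gtriples U) ->
  o = tgt X p /\ good X /\ In p P0 /\ reqP X p.
Proof.
move/in_U_tr=> [/in_Uc_tr [H _]|[/in_new_c [c [p' [[Ec _ _] [Hc _]]]]|/in_new_n [Y [p' [[EY <- ->] H]]]]].
- by exfalso; apply: H.
- by case: (nullX_nn (cs_nn Hc) (esym Ec)).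
- by by move/ord_inj/enum_rank_inj: EY => ->.
Qed.

Lemma U_typed : is_typed_graph Pred U.
Proof.
split; [|split].
- move=> s p o /in_U_tr [H|[H|H]].
  + move/in_Uc_tr: H => [_ [_ Ha]]; exact: H0.1.1 _ _ _ (Ha G0 H0).
  + move/in_new_c: H => [c [p' [[<- <- _] [Hc [_ [Hr _]]]]]]; split; last exact: reqP_pred Hr.
    apply: notlit_iri; move/in_Cs: Hc => [T /in_Uc_ty [_ Ha]]; exact: sol_ty H0 (Ha G0 H0).
  + move/in_new_n: H => [X [p' [[-> <- _] [_ [_ Hr]]]]]; split; last exact: reqP_pred Hr.
    done.
- move=> n T /in_U_ty [/in_Uc_ty [_ Ha]|/in_n_ty [X [-> _]]]; last done.
  exact: sol_ty H0 (Ha G0 H0).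
- move=> n /in_U_lit [/in_Uc_lit [_ Ha]|[-> _]]; last done.
  exact: sol_lit H0 (Ha G0 H0).
Qed.

Lemma tgt_stype (X : {set Ty E}) p T S mu s : good X -> reqP X p -> T \in X ->
  delta T p = Some (S, mu) -> In (s, p, tgt X p) (List.app new_c new_n) ->
  has_stype U S (tgt X p).
Proof.
move=> Hg Hr HT Hd Hin; case: S Hd => [S0|] Hd /=.
- have [m [_ [_ HR]]] := Hg G0 H0.
  have [Ht HS] := tgt_type H0 HR Hr HT Hd.
  rewrite Ht; apply/in_U_ty; right; apply/in_n_ty; exists (succX X p); split=> //; split=> //.
  exact: good_tgt Hg Hr Ht.
- apply/in_U_lit; right; have Ht := tgt_lit HT Hd; split=> //.
  by exists (s, p, tgt X p); split.
Qed.

Lemma U_shape : satisfies_shape U.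
Proof.
move=> T p S mu Hd n /in_U_ty [Hn|Hn].
- move: (Hn) => /in_Uc_ty [/= Hnn Ha].
  have HT : T \in Xc n by apply/in_Xc.
  have Hc : In n Cs by apply/in_Cs; exists T.
  split; [|split].
  + move=> o /(succ_const Hnn) [Ho|[-> [_ [Hp [Hr Hno]]]]].
    * move/in_Uc_tr: Ho => [_ [Hon Hao]]; case: S Hd => [S0|] Hd /=.
      - apply/in_U_ty; left; apply/in_Uc_ty; split=> // G HG.
        have [_ [Hsh _]] := HG; have [Ha' _] := Hsh T p _ mu Hd n (Ha G HG).
        exact: Ha' o (Hao G HG).
      - apply/in_U_lit; left; apply/in_Uc_lit; split=> // G HG.
        have [_ [Hsh _]] := HG; have [Ha' _] := Hsh T p _ mu Hd n (Ha G HG).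
        exact: Ha' o (Hao G HG).
    * apply: (tgt_stype (s := n) (good_Xc Hc) Hr HT Hd).
      apply/List.in_app_iff; left; apply/in_new_c; exists n, p; by [].
  + move=> Hmu o1 o2 /(succ_const Hnn) H1 /(succ_const Hnn) H2.
    case: H1 => [H1|[E1 [_ [_ [_ Hno1]]]]]; case: H2 => [H2|[E2 [_ [_ [_ Hno2]]]]].
    * have [_ [Hsh _]] := H0.
      move/in_Uc_tr: H1 => [_ [_ A1]]; move/in_Uc_tr: H2 => [_ [_ A2]].
      exact: (Hsh T p S mu Hd n (Ha G0 H0)).2.1 Hmu o1 o2 (A1 G0 H0) (A2 G0 H0).
    * by case: Hno2; exists o1.
    * by case: Hno1; exists o2.
    * by rewrite E1 E2.
  + move=> Hmu; have Hr : reqP (Xc n) p by exists T; split=> //; exists S, mu.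
    have [_ [Hsh _]] := H0; have [o0 Ho0] := (Hsh T p S mu Hd n (Ha G0 H0)).2.2 Hmu.
    have Hp : In p P0 by apply/List.in_map_iff; exists (n, p, o0).
    case: (classic (exists o, In (n, p, o) Uc_tr)) => [[o Ho]|Hno].
    * by exists o; apply/in_U_tr; left.
    * exists (tgt (Xc n) p); apply/in_U_tr; right; left; apply/in_new_c.
      by exists n, p.
- move/in_n_ty: Hn => [X [-> [Hg HT]]].
  have Hr' : (mu = MOne \/ mu = MPlus) -> reqP X p.
    by move=> Hmu; exists T; split=> //; exists S, mu.
  split; [|split].
  + move=> o /succ_null [-> [_ [Hp Hr]]].
    apply: (tgt_stype (s := nullX X) Hg Hr HT Hd).
    apply/List.in_app_iff; right; apply/in_new_n; exists X, p; by [].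
  + by move=> _ o1 o2 /succ_null [-> _] /succ_null [-> _].
  + move=> Hmu; have Hr := Hr' Hmu.
    have [m [_ [_ HR]]] := Hg G0 H0; have [m' [He _]] := step H0 HR Hr.
    have Hp : In p P0 by apply/List.in_map_iff; exists (m, p, m').
    exists (tgt X p); apply/in_U_tr; right; right; apply/in_new_n; by exists X, p.
Qed.

Lemma eval_nn v t : nonnull (eval_term (E := E) v t).
Proof. by case: t => [x|f xs] /= H. Qed.

Lemma U_tgds : satisfies_tgds I U.
Proof.
move=> d Hd v Hb a Ha.
have Hall : allsol (fun G => hatom_holds G v a) := fun G HG => HG.2.2 d Hd v Hb a Ha.
case: a Ha Hall => [t1 p t2|T t|t] _ Hall /=.
- apply/in_U_tr; left; apply/in_Uc_tr; split; [exact: eval_nn|split; [exact: eval_nn|exact: Hall]].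
- apply/in_U_ty; left; apply/in_Uc_ty; split; [exact: eval_nn|exact: Hall].
- apply/in_U_lit; left; apply/in_Uc_lit; split; [exact: eval_nn|exact: Hall].
Qed.

Lemma U_sol : sol U.
Proof. split; [exact: U_typed|split; [exact: U_shape|exact: U_tgds]]. Qed.


Definition Rel (G : tgraph E) (n m : V) : Prop :=
  In n (gnodes (underlying U)) /\ In m (gnodes (underlying G)) /\
  ((nonnull n /\ n = m) \/ (exists X, n = nullX X /\ ~ is_lit m /\ realizes G m X) \/
   (n = VNullLit Iri Lit 0 /\ is_lit m)).

Lemma step_R G m (X : {set Ty E}) p : sol G -> realizes G m X -> reqP X p ->
  In (tgt X p) (gnodes (underlying U)) ->
  exists m', In (m, p, m') (gtriples G) /\ Rel G (tgt X p) m'.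
Proof.
move=> HG HR Hr Hn; have [m' [He H]] := step HG HR Hr.
exists m'; split=> //; split=> //; split; first exact: nodes_obj He.
case: H => [[-> Hl]|[-> [Hl HR']]]; [right; right | right; left; exists (succX X p)]; by [].
Qed.

Lemma R_sim G : sol G -> simulation (underlying U) (underlying G) (Rel G).
Proof.
move=> HG n m [Hn [Hm H]]; split=> //; split=> //; split; [|split].
- case: H => [[_ <-]|[[X [-> [Hl _]]]|[-> Hl]]]; first done.
  + rewrite /nullX /=; split=> H'; [by case: H' | by case: Hl].
  + done.
- case: H => [[_ ->]|[[X [-> _]]|[-> _]]] Hnn; first done.
  + by exfalso; apply: Hnn.
  + by exfalso; apply: Hnn.
- move=> p n' He; change (In (n, p, n') (gtriples U)) in He; have Hn' := nodes_obj He; move: He Hn'.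
  case: H => [[Hnn Enm]|[[X [-> [Hl HR]]]|[-> Hl]]].
  + case/(succ_const Hnn) => [Ho|[-> [Hc [_ [Hr _]]]]] Hn'.
    * rewrite -Enm; move/in_Uc_tr: Ho => [_ [Hon Ha]]; exists n'; split; first exact: Ha G HG.
      split=> //; split; first exact: nodes_obj (Ha G HG).
      by left.
    * by rewrite -Enm; exact (step_R HG (real_Xc (c:=n) HG) Hr Hn').
  + by move/succ_null => [-> [_ [_ Hr]]] Hn'; exact (step_R HG HR Hr Hn').
  + move/in_U_tr => [/in_Uc_tr [H _]|[/in_new_c [c [p' [Ec [Hc _]]]]|/in_new_n [Y [p' [Ec _]]]]].
    * by exfalso; apply: H.
    * case: Ec => Ec _ _; by case: (cs_nn Hc); rewrite -Ec.
    * by case: Ec.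
Qed.

Lemma subj_partner G s p o : sol G -> In (s, p, o) (gtriples U) -> exists m, Rel G s m.
Proof.
move=> HG He; have := nodes_sub He.
case/in_U_tr: He => [/in_Uc_tr [Hsn [_ Ha]]|[/in_new_c [c [p' [[-> _ _] [Hc _]]]]|/in_new_n [X [p' [[-> _ _] [Hg _]]]]]] Hs.
- exists s; split=> //; split; [exact: nodes_sub (Ha G HG)|by left].
- move/in_Cs: (Hc) => [T /in_Uc_ty [Hcn Ha]].
  exists c; split=> //; split; [exact: nodes_ty (Ha G HG)|by left].
- have [m [Hm [Hl HR]]] := Hg G HG; exists m; split=> //; split=> //; right; left; by exists X.
Qed.

Lemma obj_partner G s p o : sol G -> In (s, p, o) (gtriples U) -> exists m, Rel G o m.
Proof.
move=> HG He; have [m Hm] := subj_partner HG He.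
have [_ [_ [_ [_ Hed]]]] := R_sim HG Hm.
have [m' [_ Hm']] := Hed p o He; by exists m'.
Qed.

Lemma partner G n : sol G -> In n (gnodes (underlying U)) -> exists m, Rel G n m.
Proof.
move=> HG Hn; move: (Hn) => /nodes_inv [[p [o He]]|[[s [p He]]|[[T HT]|Hl]]].
- exact: subj_partner HG He.
- exact: obj_partner HG He.
- case/in_U_ty: HT => [/in_Uc_ty [Hnn Ha]|/in_n_ty [X [En [Hg _]]]].
  + exists n; split=> //; split; [exact: nodes_ty (Ha G HG)|by left].
  + subst n; have [m [Hm [Hl HR]]] := Hg G HG; exists m; split=> //; split=> //; right; left; by exists X.
- case/in_U_lit: Hl => [/in_Uc_lit [Hnn Ha]|[_ [[[s p] o] [Ht /= Ho]]]].
  + exists n; split=> //; split; [exact: nodes_lit (Ha G HG)|by left].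
  + rewrite -Ho; apply: (obj_partner (s := s) (p := p) HG).
    by apply/in_U_tr; right; apply/List.in_app_iff.
Qed.

Lemma U_universal G : sol G -> simulated (underlying U) (underlying G).
Proof.
move=> HG n Hn; exists (Rel G); split; first exact: R_sim HG.
have [m Hm] := partner HG Hn; exists m; split=> //; exact: Hm.2.1.
Qed.

End Main.

Theorem theorem6 (Iri Lit : Type) (Pred : Iri -> Prop)
  (E : setting Iri Lit) (QC : query Iri Lit -> Prop) (Q : query Iri Lit)
  (I : instance E) :
  wf_setting Pred E ->
  consistent_setting Pred E ->
  robust_under_simulation QC ->
  QC Q ->
  consistent_instance I ->
  (certain_true Pred I Q <->
   forall U, universal_sim_solution Pred I U -> Q (underlying U)).
Proof.
move=> wf cons rob HQ HI; have [G0 H0] := cons I HI; split.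
- by move=> Hc U' [HU _]; apply: Hc.
- move=> H G HG.
  apply: (rob Q HQ (underlying (U Pred I G0)) (underlying G)).
  + exact: U_universal.
  + apply: H; split; first exact: U_sol.
    move=> G' HG'; exact: U_universal.
Qed.
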